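(* Under the hypotheses and notation of the bridging theorem (two disjoint finite connected graphs $G_1=(V_1,E_1)$, $G_2=(V_2,E_2)$ with $n_i=|V_i|\ge2$, invertible distance matrices, total curvatures $k_i$, $Z=(2+k_1/n_1)(2+k_2/n_2)\neq4$, $K_{G_1}(u)\ne0$, $K_{G_2}(v)\neq0$, and $G$ obtained by adding the edge $\{u,v\}$, $u\in V_1$, $v\in V_2$), with $V=V_1\cup V_2$ and $\alpha=\frac{2(n_1+n_2)k_2}{n_1n_2(Z-4)}$, $\beta=\frac{2(n_1+n_2)k_1}{n_1n_2(Z-4)}$, we have $$K_G(V)=\frac{\alpha}{2}K_{G_1}(V_1)+\frac{\beta}{2}K_{G_2}(V_2)=\alpha K_{G_1}(V_1)=\beta K_{G_2}(V_2).$$ In particular, the total Steinerberger curvature of $G$ depends only on $n_1,n_2,k_1,k_2$ and not on the choice of the vertices $u\in V_1$, $v\in V_2$ joined by the bridge.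
   Context: All graphs are finite, simple, connected and undirected, with the combinatorial shortest-path distance $d$. For $G=(V,E)$ with $V=\{v_1,\dots,v_n\}$, let $D=(d(v_i,v_j))_{i,j=1}^n$ be its distance matrix and $\mathbf{1}_n\in\mathbb{R}^n$ the all-ones column vector. The Steinerberger curvature $K\in\mathbb{R}^n$ (written $K_i$ or $K(v_i)$) is defined as follows: if $DK=n\mathbf{1}_n$ has a unique solution, $K$ is that solution; if it has several solutions, $K$ is a solution for which $\min_i K_i$ is maximal; if it has no solution, $K=nD^\dagger\mathbf{1}_n$ with $D^\dagger$ the Moore–Penrose pseudoinverse. The total curvature of a vertex subset $W$ is $K(W)=\sum_{w\in W}K(w)$; $K_G$, $K_{G_1}$, $K_{G_2}$ denote the Steinerberger curvatures of $G$, $G_1$, $G_2$. *)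

(* Defs.v *)
From HB Require Import structures.
From mathcomp Require Import all_boot all_order all_algebra.
Set Implicit Arguments. Unset Strict Implicit. Unset Printing Implicit Defensive.
Import Order.TTheory GRing.Theory Num.Theory.
Local Open Scope ring_scope.

Definition simple_connected (n : nat) (e : rel 'I_n) : Prop :=
  symmetric e /\ irreflexive e /\ (forall x y, connect e x y).

Fixpoint reach (n : nat) (e : rel 'I_n) (k : nat) (x y : 'I_n) : bool :=
  match k with
  | 0 => x == y
  | k'.+1 => [exists z, reach e k' x z && e z y]
  end.

(* shortest-path distance: least k (< n) such that a walk of length k exists
   (for connected graphs this is always < n) *)
Definition gdist (n : nat) (e : rel 'I_n) (x y : 'I_n) : nat :=
  find (fun k => reach e k x y) (iota 0 n).

Definition distmx (R : pzRingType) (n : nat) (e : rel 'I_n) : 'M[R]_n :=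
  \matrix_(i, j) (gdist e i j)%:R.

(* B is a Moore-Penrose pseudoinverse of A (real case: transpose = adjoint) *)
Definition is_pinv (R : pzRingType) (n : nat) (A B : 'M[R]_n) : Prop :=
  [/\ A *m B *m A = A, B *m A *m B = B,
      (A *m B)^T = A *m B & (B *m A)^T = B *m A].

(* K is the Steinerberger curvature associated with the distance matrix D.
   "min_i K'_i <= min_i K_i" is written as: exists i, forall j, K' i <= K j. *)
Definition is_steinerberger_curvature (R : realFieldType) (n : nat)
    (D : 'M[R]_n) (K : 'cV[R]_n) : Prop :=
  let b : 'cV[R]_n := const_mx n%:R in
  (D *m K = b /\ (forall K', D *m K' = b -> K' = K))
  \/ (D *m K = b /\ (exists K', D *m K' = b /\ K' <> K) /\
      (forall K', D *m K' = b -> exists i, forall j, K' i 0 <= K j 0))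
  \/ ((forall K', D *m K' <> b) /\
      exists B, is_pinv D B /\ K = n%:R *: (B *m const_mx 1)).

Definition total_curv (R : pzRingType) (n : nat) (K : 'cV[R]_n) : R :=
  \sum_i K i 0.

Definition bridge (n1 n2 : nat) (e1 : rel 'I_n1) (e2 : rel 'I_n2)
    (u : 'I_n1) (v : 'I_n2) : rel 'I_(n1 + n2) :=
  fun x y =>
    match split x, split y with
    | inl a, inl b => e1 a b
    | inr a, inr b => e2 a b
    | inl a, inr b => (a == u) && (b == v)
    | inr a, inl b => (a == v) && (b == u)
    end.

(* Main.v *)
Require Import Defs.
From HB Require Import structures.
From mathcomp Require Import all_boot all_order all_algebra.
From mathcomp Require Import zify.
Import Order.TTheory GRing.Theory Num.Theory.
Set Implicit Arguments. Unset Strict Implicit.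

Section Reach.
Variables (n : nat) (e : rel 'I_n).

Lemma reach_cat a b x y z : reach e a x y -> reach e b y z -> reach e (a + b) x z.
Proof.
elim: b z => [|b IH] z /=; first by rewrite addn0 => H /eqP <-.
move=> Ha /existsP[w /andP[Hw Hwz]]; rewrite addnS /=.
by apply/existsP; exists w; rewrite (IH _ Ha Hw).
Qed.

Lemma reach1 x y : e x y -> reach e 1 x y.
Proof. by move=> H; apply/existsP; exists x; rewrite /= eqxx. Qed.

Lemma reach_path k x y : reach e k x y ->
  exists p, [/\ path e x p, last x p = y & size p = k].
Proof.
elim: k y => [|k IH] y /=; first by move=> /eqP <-; exists [::].
move=> /existsP[z /andP[/IH [p [Hp Hl Hs]] Hzy]].
exists (rcons p y); rewrite rcons_path last_rcons size_rcons Hp Hl Hzy Hs.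
by split.
Qed.

Lemma path_reach x p : path e x p -> reach e (size p) x (last x p).
Proof.
elim: p x => [|y p IH] x /=; first by rewrite eqxx.
move=> /andP[Hxy Hp]; have := reach_cat (reach1 Hxy) (IH _ Hp).
by rewrite add1n.
Qed.

Lemma reach_short k x y : reach e k x y ->
  exists2 k', (k' <= k)%N /\ (k' < n)%N & reach e k' x y.
Proof.
move=> Hk; case: (ltnP k n) => Hkn; first by exists k.
have [p [Hp Hl Hs]] := reach_path Hk.
case: (shortenP Hp) Hl => p' Hp' Hu _ Hl.
exists (size p'); last by rewrite -Hl; apply: path_reach.
move/card_uniqP: Hu => H2; have := max_card (mem (x :: p')).
rewrite card_ord H2 /= => H1; lia.
Qed.

Lemma gdist_le k x y : reach e k x y -> (gdist e x y <= k)%N.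
Proof.
case/reach_short => k' [Hk' Hk'n] Hr; apply: leq_trans Hk'.
rewrite /gdist; set P := (fun k => reach e k x y).
have Hhas : has P (iota 0 n) by apply/hasP; exists k'; rewrite // mem_iota.
rewrite leqNgt; apply/negP => Hlt.
have := before_find 0 Hlt; rewrite nth_iota // add0n /P Hr //.
Qed.

Lemma gdist_reach k x y : reach e k x y -> reach e (gdist e x y) x y /\ (gdist e x y < n)%N.
Proof.
case/reach_short => k' [Hk' Hk'n] Hr.
rewrite /gdist; set P := (fun k => reach e k x y).
have Hhas : has P (iota 0 n) by apply/hasP; exists k'; rewrite // mem_iota.
have := nth_find 0 Hhas; rewrite has_find size_iota in Hhas.
by rewrite nth_iota.
Qed.

Lemma gdist_eq m x y : reach e m x y -> (forall k, reach e k x y -> m <= k)%N ->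
  gdist e x y = m.
Proof.
move=> Hm Hmin; apply/eqP; rewrite eqn_leq (gdist_le Hm) Hmin //.
exact: (gdist_reach Hm).1.
Qed.

Lemma gdist_xx x : gdist e x x = 0%N.
Proof. by apply: gdist_eq => //=; rewrite eqxx. Qed.

Lemma conn_reach x y : connect e x y -> exists k, reach e k x y.
Proof. by case/connectP => p Hp ->; exists (size p); apply: path_reach. Qed.

Lemma reach_sym : symmetric e -> forall k x y, reach e k x y -> reach e k y x.
Proof.
move=> He; elim=> [|k IH] x y /=; first by rewrite eq_sym.
move=> /existsP[z /andP[Hxz Hzy]].
have := reach_cat (reach1 (_ : e y z)) (IH _ _ Hxz); rewrite add1n; apply.
by rewrite He.
Qed.

Lemma gdist_sym : symmetric e -> (forall x y, connect e x y) ->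
  forall x y, gdist e x y = gdist e y x.
Proof.
move=> He Hc x y; have [k Hk] := conn_reach (Hc x y).
have [H1 _] := gdist_reach Hk.
symmetry; apply: gdist_eq; first exact: (reach_sym He H1).
by move=> j /(reach_sym He) /gdist_le.
Qed.
End Reach.

Section Bridge.
Variables (n1 n2 : nat) (e1 : rel 'I_n1) (e2 : rel 'I_n2) (u : 'I_n1) (v : 'I_n2).
Hypothesis (c1 : simple_connected e1) (c2 : simple_connected e2).
Let E := bridge e1 e2 u v.
Let L := @lshift n1 n2.
Let Rs := @rshift n1 n2.

Lemma sL a : split (L a) = inl a.
Proof. exact: (unsplitK (inl a)). Qed.
Lemma sR a : split (Rs a) = inr a.
Proof. exact: (unsplitK (inr a)). Qed.

Lemma lift_l k a b : reach e1 k a b -> reach E k (L a) (L b).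
Proof.
elim: k b => [|k IH] b /=; first by move=> /eqP ->.
move=> /existsP[w /andP[Hw Hwb]]; apply/existsP; exists (L w).
by rewrite IH //= /E /bridge !sL.
Qed.

Lemma lift_r k a b : reach e2 k a b -> reach E k (Rs a) (Rs b).
Proof.
elim: k b => [|k IH] b /=; first by move=> /eqP ->.
move=> /existsP[w /andP[Hw Hwb]]; apply/existsP; exists (Rs w).
by rewrite IH //= /E /bridge !sR.
Qed.

Lemma tri (m : nat) (e : rel 'I_m) : simple_connected e ->
  forall x w' w, e w' w -> (gdist e x w <= gdist e x w' + 1)%N.
Proof.
case=> _ [_ Hc] x w' w Hw; have [k Hk] := conn_reach (Hc x w').
have [H1 _] := gdist_reach Hk.
exact: gdist_le (reach_cat H1 (reach1 Hw)).
Qed.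

Lemma reach_g (m : nat) (e : rel 'I_m) : simple_connected e ->
  forall x y, reach e (gdist e x y) x y.
Proof.
case=> _ [_ Hc] x y; have [k Hk] := conn_reach (Hc x y).
exact: (gdist_reach Hk).1.
Qed.

Lemma lower_L x k z : reach E k (L x) z ->
  match split z with inl w => (gdist e1 x w <= k)%N
  | inr w => (gdist e1 x u + 1 + gdist e2 v w <= k)%N end.
Proof.
elim: k z => [|k IH] z /=.
  by move=> /eqP <-; rewrite sL gdist_xx.
move=> /existsP[z' /andP[/IH Hz' Hz]]; move: Hz Hz'; rewrite /E /bridge.
case: (split z') => w'; case: (split z) => w.
- move=> Hw H; apply: leq_trans (tri c1 x Hw) _; lia.
- move=> /andP[/eqP -> /eqP ->]; rewrite gdist_xx; lia.
- move=> /andP[/eqP -> /eqP ->]; rewrite gdist_xx; lia.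
- move=> Hw H; have := tri c2 v Hw; lia.
Qed.

Lemma lower_R x k z : reach E k (Rs x) z ->
  match split z with inr w => (gdist e2 x w <= k)%N
  | inl w => (gdist e2 x v + 1 + gdist e1 u w <= k)%N end.
Proof.
elim: k z => [|k IH] z /=.
  by move=> /eqP <-; rewrite sR gdist_xx.
move=> /existsP[z' /andP[/IH Hz' Hz]]; move: Hz Hz'; rewrite /E /bridge.
case: (split z') => w'; case: (split z) => w.
- move=> Hw H; have := tri c1 u Hw; lia.
- move=> /andP[/eqP -> /eqP ->]; rewrite gdist_xx; lia.
- move=> /andP[/eqP -> /eqP ->]; rewrite gdist_xx; lia.
- move=> Hw H; apply: leq_trans (tri c2 x Hw) _; lia.
Qed.

Lemma dist_LL a b : gdist E (L a) (L b) = gdist e1 a b.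
Proof.
apply: gdist_eq; first exact/lift_l/reach_g.
by move=> k /lower_L; rewrite sL.
Qed.

Lemma dist_RR a b : gdist E (Rs a) (Rs b) = gdist e2 a b.
Proof.
apply: gdist_eq; first exact/lift_r/reach_g.
by move=> k /lower_R; rewrite sR.
Qed.

Lemma dist_LR a b : gdist E (L a) (Rs b) = (gdist e1 a u + 1 + gdist e2 v b)%N.
Proof.
apply: gdist_eq; last by move=> k /lower_L; rewrite sR.
apply: reach_cat (lift_r (reach_g c2 v b)).
apply: reach_cat (lift_l (reach_g c1 a u)) _.
by apply: reach1; rewrite /E /bridge sL sR !eqxx.
Qed.

Lemma dist_RL a b : gdist E (Rs a) (L b) = (gdist e2 a v + 1 + gdist e1 u b)%N.
Proof.
apply: gdist_eq; last by move=> k /lower_R; rewrite sL.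
apply: reach_cat (lift_l (reach_g c1 u b)).
apply: reach_cat (lift_r (reach_g c2 a v)) _.
by apply: reach1; rewrite /E /bridge sL sR !eqxx.
Qed.
End Bridge.
Local Open Scope ring_scope.
From mathcomp Require Import ring lra.

Section Alg.
Variable R : realFieldType.

Lemma sum_affine m (c : R) (f y : 'I_m -> R) :
  \sum_j (c + f j) * y j = c * \sum_j y j + \sum_j f j * y j.
Proof. by rewrite mulr_sumr -big_split; apply: eq_bigr => j _; rewrite mulrDl. Qed.

Lemma weighted m (d : 'I_m -> 'I_m -> R) (K x : 'I_m -> R) :
  (forall i j, d i j = d j i) -> (forall i, \sum_j d i j * K j = m%:R) ->
  \sum_i K i * (\sum_j d i j * x j) = m%:R * \sum_j x j.
Proof.
move=> Hs HK.
transitivity (\sum_j x j * \sum_i d j i * K i).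
  under eq_bigr do rewrite mulr_sumr.
  rewrite exchange_big /=; apply: eq_bigr => j _; rewrite mulr_sumr.
  by apply: eq_bigr => i _; rewrite Hs; ring.
rewrite mulr_sumr; apply: eq_bigr => j _; rewrite HK; ring.
Qed.

Lemma side m (d : 'I_m -> 'I_m -> R) (K x : 'I_m -> R) (u : 'I_m) (sy q N : R) :
  (forall i j, d i j = d j i) -> (forall i, \sum_j d i j * K j = m%:R) ->
  (forall i, \sum_j d i j * x j + (d i u + 1) * sy + q = N) ->
  m%:R * \sum_j x j + (m%:R + \sum_i K i) * sy + (\sum_i K i) * q = N * \sum_i K i.
Proof.
move=> Hs HK Hx.
have : \sum_i K i * (\sum_j d i j * x j + (d i u + 1) * sy + q) = \sum_i K i * N.
  by apply: eq_bigr => i _; rewrite Hx.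
rewrite -mulr_suml mulrC => <-; symmetry.
under eq_bigr do rewrite !mulrDr.
rewrite big_split big_split /= weighted //.
have -> : \sum_i K i * ((d i u + 1) * sy) = (m%:R + \sum_i K i) * sy.
  rewrite -(HK u) mulrDl !big_distrl -big_split /=; apply: eq_bigr => i _.
  rewrite Hs; ring.
by rewrite -mulr_suml mulrC.
Qed.
End Alg.

Lemma final (R : realFieldType) (n1 n2 k1 k2 N sx sy p q : R) : n1 != 0 -> n2 != 0 ->
  (2 + k1 / n1) * (2 + k2 / n2) != 4 ->
  n1*sx + (n1+k1)*sy + k1 * q = N*k1 -> n2*sy + (n2+k2)*sx + k2 * p = N*k2 ->
  p + sy + q = N -> q + sx + p = N ->
  let alpha := 2 * N * k2 / (n1 * n2 * ((2 + k1 / n1) * (2 + k2 / n2) - 4)) in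
  let beta := 2 * N * k1 / (n1 * n2 * ((2 + k1 / n1) * (2 + k2 / n2) - 4)) in
  sx + sy = alpha / 2 * k1 + beta / 2 * k2 /\ sx + sy = alpha * k1 /\ sx + sy = beta * k2.
Proof.
move=> h1 h2 hZ E1 E2 E3 E4 alpha beta.
have exy : sx = sy by lra.
have HD : n1 * n2 * ((2 + k1 / n1) * (2 + k2 / n2) - 4) = k1*k2 + 2*n1*k2 + 2*n2*k1.
  by field; rewrite h1 h2.
have hD : k1*k2 + 2*n1*k2 + 2*n2*k1 != 0.
  rewrite -HD !mulf_neq0 //; by rewrite subr_eq0.
have Es1 : 2 * n1 * sx = k1 * p.
  have : 2 * n1 * sx - k1 * p = (n1*sx + (n1+k1)*sy + k1 * q) - (p + sy + q) * k1.
    rewrite exy; ring.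
  by rewrite E1 E3 subrr => /eqP; rewrite subr_eq0 => /eqP.
have Es2 : 2 * n2 * sx = k2 * q.
  have : 2 * n2 * sx - k2 * q = (n2*sy + (n2+k2)*sx + k2 * p) - (q + sx + p) * k2.
    rewrite exy; ring.
  by rewrite E2 E4 subrr => /eqP; rewrite subr_eq0 => /eqP.
have Es : sx = N * k1 * k2 / (k1*k2 + 2*n1*k2 + 2*n2*k1).
  apply: (canRL (mulfK hD)).
  have -> : sx * (k1 * k2 + 2 * n1 * k2 + 2 * n2 * k1) = k1 * k2 * sx + k2 * (2 * n1 * sx) + k1 * (2 * n2 * sx) by ring.
  rewrite Es1 Es2 -E3 -exy; ring.
rewrite /alpha /beta HD -exy Es.
split; [|split]; field; rewrite hD ?h1 ?h2 //=.

Qed.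

Lemma curv_sol (R : realFieldType) n (D : 'M[R]_n) K :
  D \in unitmx -> is_steinerberger_curvature D K -> D *m K = const_mx n%:R.
Proof.
move=> U [[H _]|[[H _]|[H _]]] //; exfalso; apply: (H (invmx D *m const_mx n%:R)).
by rewrite mulKVmx.
Qed.

Lemma sum_dirac (R : realFieldType) m (f g : 'I_m -> R) (c s : R) (u : 'I_m) :
  \sum_j f j * (c * g j - s * (j == u)%:R) = c * \sum_j f j * g j - s * f u.
Proof.
under eq_bigr do rewrite mulrBr.
rewrite sumrB mulr_sumr; congr (_ - _).
  by apply: eq_bigr => j _; rewrite mulrCA.
rewrite (bigD1 u) //= eqxx big1 ?addr0; first by rewrite mulr1 mulrC.
by move=> j /negbTE ->; rewrite mulr0 mulr0.
Qed.

Lemma sum_dirac1 (R : realFieldType) m (g : 'I_m -> R) (c s : R) (u : 'I_m) :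
  \sum_j (c * g j - s * (j == u)%:R) = c * \sum_j g j - s.
Proof.
have := sum_dirac (fun _ => 1) g c s u; under eq_bigr do rewrite mul1r.
by move=> ->; rewrite mulr1; congr (_ * _ - _); apply: eq_bigr => j _; rewrite mul1r.
Qed.

Lemma delta_neq0 (R : realFieldType) (n1 n2 k1 k2 : R) : n1 != 0 -> n2 != 0 ->
  (2 + k1 / n1) * (2 + k2 / n2) != 4 -> k1*k2 + 2*n1*k2 + 2*n2*k1 != 0.
Proof.
move=> h1 h2 hZ.
have HD : n1 * n2 * ((2 + k1 / n1) * (2 + k2 / n2) - 4) = k1*k2 + 2*n1*k2 + 2*n2*k1.
  by field; rewrite h1 h2.
by rewrite -HD !mulf_neq0 // subr_eq0.
Qed.

Section Rows.
Variables (R : realFieldType) (n1 n2 : nat) (e1 : rel 'I_n1) (e2 : rel 'I_n2)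
  (u : 'I_n1) (v : 'I_n2).
Hypotheses (c1 : simple_connected e1) (c2 : simple_connected e2).

Lemma rowL (K : 'cV[R]_(n1 + n2)) i :
  (distmx R (bridge e1 e2 u v) *m K) (lshift n2 i) 0 =
  \sum_j (gdist e1 i j)%:R * K (lshift n2 j) 0 +
  \sum_j ((gdist e1 i u)%:R + 1 + (gdist e2 v j)%:R) * K (rshift n1 j) 0.
Proof.
rewrite mxE big_split_ord /=; congr (_ + _); apply: eq_bigr => j _.
  by rewrite mxE (dist_LL u v c1 c2).
by rewrite mxE (dist_LR u v c1 c2) !natrD.
Qed.

Lemma rowR (K : 'cV[R]_(n1 + n2)) i :
  (distmx R (bridge e1 e2 u v) *m K) (rshift n1 i) 0 =
  \sum_j ((gdist e2 i v)%:R + 1 + (gdist e1 u j)%:R) * K (lshift n2 j) 0 +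
  \sum_j (gdist e2 i j)%:R * K (rshift n1 j) 0.
Proof.
rewrite mxE big_split_ord /=; congr (_ + _); apply: eq_bigr => j _.
  by rewrite mxE (dist_RL u v c1 c2) !natrD.
by rewrite mxE (dist_RR u v c1 c2).
Qed.
End Rows.

Lemma calcR (R : realFieldType) (N m1 m2 k1 k2 D dd : R) : m1 != 0 -> m2 != 0 -> D != 0 ->
  D = k1 * k2 + 2 * m1 * k2 + 2 * m2 * k1 -> N = m1 + m2 ->
  (dd + 1) * (2 * N * m1 * k2 / D / m1 * k1 - N * k1 * k2 / D) +
  (2 * N * m1 * k2 / D / m1 * m1 - N * k1 * k2 / D * 0) +
  (2 * N * m2 * k1 / D / m2 * m2 - N * k1 * k2 / D * dd) = N.
Proof.
move=> h1 h2 hD eD eN; rewrite eD in hD *; rewrite eN; field.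
by rewrite hD h1 h2.
Qed.

Lemma calcL (R : realFieldType) (N m1 m2 k1 k2 D dd : R) : m1 != 0 -> m2 != 0 -> D != 0 ->
  D = k1 * k2 + 2 * m1 * k2 + 2 * m2 * k1 -> N = m1 + m2 ->
  2 * N * m1 * k2 / D / m1 * m1 - N * k1 * k2 / D * dd + ((dd + 1) * (2 * N * m2 * k1 / D / m2 * k2 - N * k1 * k2 / D) + (2 * N * m2 * k1 / D / m2 * m2 - N * k1 * k2 / D * 0)) = N.
Proof.
move=> h1 h2 hD eD eN; rewrite eD in hD *; rewrite eN; field.
by rewrite hD h1 h2.
Qed.

Theorem mainTheorem6 (R : realFieldType) (n1 n2 : nat)
    (e1 : rel 'I_n1) (e2 : rel 'I_n2) (u : 'I_n1) (v : 'I_n2)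
    (K1 : 'cV[R]_n1) (K2 : 'cV[R]_n2) (KG : 'cV[R]_(n1 + n2)) :
  (2 <= n1)%N -> (2 <= n2)%N ->
  simple_connected e1 -> simple_connected e2 ->
  distmx R e1 \in unitmx -> distmx R e2 \in unitmx ->
  is_steinerberger_curvature (distmx R e1) K1 ->
  is_steinerberger_curvature (distmx R e2) K2 ->
  is_steinerberger_curvature (distmx R (bridge e1 e2 u v)) KG ->
  let k1 := total_curv K1 in
  let k2 := total_curv K2 in
  let Z := (2 + k1 / n1%:R) * (2 + k2 / n2%:R) in
  Z != 4 ->
  K1 u 0 != 0 -> K2 v 0 != 0 ->
  let alpha := 2 * (n1 + n2)%:R * k2 / (n1%:R * n2%:R * (Z - 4)) in
  let beta := 2 * (n1 + n2)%:R * k1 / (n1%:R * n2%:R * (Z - 4)) in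
  total_curv KG = alpha / 2 * k1 + beta / 2 * k2 /\
  total_curv KG = alpha * k1 /\
  total_curv KG = beta * k2.
Proof.
move=> hn1 hn2 c1 c2 U1 U2 C1 C2 CG k1 k2 Z HZ _ _ alpha beta.
have hr1 : n1%:R != 0 :> R by rewrite pnatr_eq0 -lt0n; apply: leq_trans hn1.
have hr2 : n2%:R != 0 :> R by rewrite pnatr_eq0 -lt0n; apply: leq_trans hn2.
have S1 := curv_sol U1 C1; have S2 := curv_sol U2 C2.
have R1 i : \sum_j (gdist e1 i j)%:R * K1 j 0 = n1%:R :> R.
  have := congr1 (fun M : 'M[R]_(n1,1) => M i 0) S1; rewrite !mxE => <-.
  by apply: eq_bigr => j _; rewrite mxE.
have R2 i : \sum_j (gdist e2 i j)%:R * K2 j 0 = n2%:R :> R.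
  have := congr1 (fun M : 'M[R]_(n2,1) => M i 0) S2; rewrite !mxE => <-.
  by apply: eq_bigr => j _; rewrite mxE.
have c1' := c1; have c2' := c2.
case: c1' => s1 [_ cc1]; case: c2' => s2 [_ cc2].
have sym1 i j : (gdist e1 i j)%:R = (gdist e1 j i)%:R :> R by rewrite (gdist_sym s1 cc1).
have sym2 i j : (gdist e2 i j)%:R = (gdist e2 j i)%:R :> R by rewrite (gdist_sym s2 cc2).
have u0 : (gdist e1 u u)%:R = 0 :> R by rewrite gdist_xx.
have v0 : (gdist e2 v v)%:R = 0 :> R by rewrite gdist_xx.
set N : R := (n1 + n2)%:R.
have key : forall K : 'cV[R]_(n1 + n2),
    distmx R (bridge e1 e2 u v) *m K = const_mx N ->
    total_curv K = alpha / 2 * k1 + beta / 2 * k2 /\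
    total_curv K = alpha * k1 /\ total_curv K = beta * k2.
  move=> K SK.
  set x := fun j => K (lshift n2 j) 0; set y := fun j => K (rshift n1 j) 0.
  have Hx i : \sum_j (gdist e1 i j)%:R * x j + ((gdist e1 i u)%:R + 1) * \sum_j y j
      + \sum_j (gdist e2 v j)%:R * y j = N.
    have := congr1 (fun M : 'M[R]_(n1+n2,1) => M (lshift n2 i) 0) SK.
    by rewrite (rowL u v c1 c2) mxE sum_affine addrA.
  have Hy i : \sum_j (gdist e2 i j)%:R * y j + ((gdist e2 i v)%:R + 1) * \sum_j x j
      + \sum_j (gdist e1 u j)%:R * x j = N.
    have := congr1 (fun M : 'M[R]_(n1+n2,1) => M (rshift n1 i) 0) SK.
    rewrite (rowR u v c1 c2) mxE sum_affine => <-.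
    rewrite -!/(x _) -!/(y _); lra.
  have E1 := side sym1 R1 Hx.
  have E2 := side sym2 R2 Hy.
  have E3 := Hx u; rewrite u0 add0r mul1r in E3.
  have E4 := Hy v; rewrite v0 add0r mul1r in E4.
  have -> : total_curv K = \sum_j x j + \sum_j y j by rewrite /total_curv big_split_ord.
  exact: (final hr1 hr2 HZ E1 E2 E3 E4).
case: CG => [[H _]|[[H _]|[H _]]]; try exact: key H.
exfalso.
have tk1 : \sum_j K1 j 0 = k1 by [].
have tk2 : \sum_j K2 j 0 = k2 by [].
have hD := delta_neq0 hr1 hr2 HZ.
set D := k1 * k2 + 2 * n1%:R * k2 + 2 * n2%:R * k1.
set s := N * k1 * k2 / D.
set p := 2 * N * n1%:R * k2 / D.
set q := 2 * N * n2%:R * k1 / D.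
pose xs := fun j => p / n1%:R * K1 j 0 - s * (j == u)%:R.
pose ys := fun j => q / n2%:R * K2 j 0 - s * (j == v)%:R.
pose K' : 'cV[R]_(n1 + n2) := \col_i (match split i with inl a => xs a | inr b => ys b end).
have KL j : K' (lshift n2 j) 0 = xs j by rewrite mxE sL.
have KR j : K' (rshift n1 j) 0 = ys j by rewrite mxE sR.
apply: (H K'); apply/matrixP => i j; rewrite ord1 [RHS]mxE.
case: (split_ordP i) => a ->.
  rewrite (rowL u v c1 c2); under eq_bigr do rewrite KL; under [X in _ + X]eq_bigr do rewrite KR.
  rewrite sum_affine /xs /ys sum_dirac R1 sum_dirac1 sum_dirac R2 v0.
  rewrite tk2.
  rewrite /s /p /q /N.
  exact: (calcL (gdist e1 a u)%:R hr1 hr2 hD erefl (natrD _ _ _)).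
rewrite (rowR u v c1 c2); under eq_bigr do rewrite KL; under [X in _ + X]eq_bigr do rewrite KR.
rewrite sum_affine /xs /ys sum_dirac R1 sum_dirac1 sum_dirac R2 u0.
rewrite tk1.
rewrite /s /p /q /N.
exact: (calcR (gdist e2 a v)%:R hr1 hr2 hD erefl (natrD _ _ _)).
Qed.
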